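(* Let $X$ be a nontrivial real Hausdorff locally convex space, let $g\in\Gamma(X)$ be sublinear, and let $x^{\ast}\in\partial g(0)$. Let $L_g:=\{x\in X: g(x)=\langle x,x^{\ast}\rangle,\ g(-x)=-\langle x,x^{\ast}\rangle\}$ (a closed linear subspace independent of the choice of $x^{\ast}\in\partial g(0)$), $\widehat{X}:=X/L_g$ with the quotient topology, and define $\widehat{g}_{x^{\ast}}:\widehat{X}\to\mathbb{R}\cup\{\pm\infty\}$ by $\widehat{g}_{x^{\ast}}(\widehat{x}):=g(x)-\langle x,x^{\ast}\rangle$ (this is well defined). Then $\widehat{g}_{x^{\ast}}$ is a proper lower semicontinuous sublinear function with $\widehat{g}_{x^{\ast}}\ge0$ and $L_{\widehat{g}_{x^{\ast}}}=\{\widehat{0}\}$. Moreover, $x^{\ast}\in\operatorname{qri}\partial g(0)$ if and only if $0\in\operatorname{qi}\partial\widehat{g}_{x^{\ast}}(\widehat{0})$.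
   Context: $X^{\ast}$ is the topological dual of $X$ with the weak$^{\ast}$ topology; similarly $(\widehat{X})^{\ast}$ carries its weak$^{\ast}$ topology, and closures in dual spaces are weak$^{\ast}$ closures. $\Gamma(X)$ is the set of proper lower semicontinuous convex functions. For a proper lsc sublinear $k$ on a locally convex space $V$: $\partial k(0)=\{v^{\ast}\in V^{\ast}: v^{\ast}\le k\}$ and $L_k:=\{v\in V: k(v)=\langle v,u^{\ast}\rangle,\ k(-v)=-\langle v,u^{\ast}\rangle\}$ for any $u^{\ast}\in\partial k(0)$ (independent of this choice). For convex $B\subset V^{\ast}$: $\operatorname{qri}B=\{b\in B:\overline{\mathbb{R}_+(B-b)}\text{ is a linear subspace}\}$ and $\operatorname{qi}B=\{b\in B:\overline{\mathbb{R}_+(B-b)}=V^{\ast}\}$. *)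

(* Defs.v *)
From HB Require Import structures.
From mathcomp Require Import all_boot all_order all_algebra.
From mathcomp Require Import all_classical all_reals all_analysis.
Set Implicit Arguments. Unset Strict Implicit. Unset Printing Implicit Defensive.
Import Order.TTheory GRing.Theory Num.Theory.
Import numFieldTopology.Exports.
Local Open Scope classical_set_scope.
Local Open Scope ring_scope.

Section defs.
Context {R : realType}.

Definition is_linear {U W : lmodType R} (f : U -> W) :=
  forall (a : R) (x y : U), f (a *: x + y) = a *: f x + f y.

Definition dual (V : preTopologicalLmodType R) : set (V -> R) :=
  [set f | (forall (a : R) (x y : V), f (a *: x + y) = a * f x + f y)
           /\ continuous f].

(* weak^* closure, inside V^*, of a set S of functionals: f is in it iff
   every basic weak^* neighbourhood of f (finitely many points, radius e)
   meets S *)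
Definition wclosure (V : preTopologicalLmodType R) (S : set (V -> R))
  : set (V -> R) :=
  [set f | @dual V f /\
     forall (s : seq V) (e : R), 0 < e ->
       exists2 h, S h & forall v, v \in s -> `|h v - f v| < e].

Definition cone_at (V : preTopologicalLmodType R) (B : set (V -> R)) (b : V -> R)
  : set (V -> R) :=
  [set f | exists t c, 0 <= t /\ B c /\ f = (fun v => t * (c v - b v))].

Definition dual_subspace (V : preTopologicalLmodType R) (M : set (V -> R)) :=
  M (fun _ => 0) /\
  (forall f h, M f -> M h -> M (fun v => f v + h v)) /\
  (forall (t : R) f, M f -> M (fun v => t * f v)).

Definition qri (V : preTopologicalLmodType R) (B : set (V -> R)) : set (V -> R) :=
  [set b | B b /\ dual_subspace (wclosure (cone_at B b))].

Definition qi (V : preTopologicalLmodType R) (B : set (V -> R)) : set (V -> R) :=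
  [set b | B b /\ wclosure (cone_at B b) = @dual V].

Definition subdiff0 (V : preTopologicalLmodType R) (k : V -> \bar R)
  : set (V -> R) :=
  [set f | @dual V f /\ forall v, ((f v)%:E <= k v)%E].

(* L_k, computed with u in partial k(0) *)
Definition Lsp (V : preTopologicalLmodType R) (k : V -> \bar R) (u : V -> R)
  : set V :=
  [set v | k v = (u v)%:E /\ k (- v) = (- u v)%:E].

Definition proper_fun (V : lmodType R) (k : V -> \bar R) :=
  (forall v, k v != -oo%E) /\ exists v, (k v < +oo)%E.

Definition convex_fun (V : lmodType R) (k : V -> \bar R) :=
  forall (x y : V) (t : R), 0 <= t <= 1 ->
    (k (t *: x + (1 - t) *: y)%R <= t%:E * k x + (1 - t)%:E * k y)%E.

Definition sublinear (V : lmodType R) (k : V -> \bar R) :=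
  (forall (t : R) (x : V), 0 < t -> k (t *: x) = (t%:E * k x)%E) /\
  (forall x y : V, (k (x + y)%R <= k x + k y)%E).

Definition Gamma (V : preTopologicalLmodType R) (k : V -> \bar R) :=
  proper_fun k /\ lower_semicontinuous k /\ convex_fun k.

(* hat g_{x^*} on the quotient Y (with projection pi): evaluated at a
   chosen preimage x of y *)
Definition hatg (X : tvsType R) (Y : lmodType R) (pi : X -> Y)
  (g : X -> \bar R) (xs : X -> R) (y : Y) : \bar R :=
  let x := xget 0 [set x | pi x = y] in (g x - (xs x)%:E)%E.

End defs.

(* Main.v *)
Require Import Defs.
From HB Require Import structures.
From mathcomp Require Import all_boot all_order all_algebra.
From mathcomp Require Import all_classical all_reals all_analysis.
From mathcomp Require Import ring lra.
Import Order.TTheory GRing.Theory Num.Theory.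
Import numFieldTopology.Exports.
Local Open Scope classical_set_scope.
Local Open Scope ring_scope.
Section AnalyticHB.
Variables (R : realType) (V : lmodType R) (p : V -> R).
Hypothesis pZ : forall (t : R) x, 0 < t -> p (t *: x) = t * p x.
Hypothesis pD : forall x y, p (x + y) <= p x + p y.

Lemma p0 : p 0 = 0.
Proof.
have := @pZ 2 0 (@ltr0Sn R 1); rewrite scaler0 => h.
have : (1 : R) * p 0 = 2 * p 0 by rewrite mul1r {1}h.
lra.
Qed.

Lemma pN x : - p (- x) <= p x.
Proof. have := pD x (- x); rewrite subrr p0; lra. Qed.

Definition goodG (x0 : V) (G : set (V * R)) :=
  [/\ (forall x a b, G (x,a) -> G (x,b) -> a = b),
      (forall x a y b, G (x,a) -> G (y,b) -> G (x+y, a+b)),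
      (forall t x a, G (x,a) -> G (t*:x, t*a)),
      (forall x a, G (x,a) -> a <= p x) &
      G (x0, p x0)].

Lemma G0good x0 : goodG x0 [set xa | exists t, xa = (t *: x0, t * p x0)].
Proof.
split.
- move=> x a b [t [-> ->]] [t' [e ->]].
  have [->//|tt'] := eqVneq t t'.
  have : (t - t') *: x0 = 0 by rewrite scalerBl e subrr.
  move/eqP; rewrite scaler_eq0 subr_eq0 (negbTE tt') /= => /eqP x00.
  by rewrite x00 p0 !mulr0.
- move=> x a y b [t [-> ->]] [t' [-> ->]]; exists (t + t').
  by rewrite scalerDl mulrDl.
- move=> s x a [t [-> ->]]; exists (s * t); by rewrite scalerA mulrA.
- move=> x a [t [-> ->]].
  have [t0|t0|->] := ltgtP t 0; last by rewrite scale0r mul0r p0.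
  + have := pN (t *: x0); rewrite -scaleNr pZ; last by rewrite oppr_gt0.
    lra.
  + by rewrite pZ.
- by exists 1; rewrite scale1r mul1r.
Qed.

Lemma extendG x0 G z : goodG x0 G -> ~ (exists a, G (z, a)) ->
  exists G', goodG x0 G' /\ G `<` G'.
Proof.
move=> [Gf GD GZ Gp Gx0] nz.
have G00 : G (0, 0) by have := GZ 0 _ _ Gx0; rewrite scale0r mul0r.
have key y b y' b' : G (y, b) -> G (y', b') -> b - p (y - z) <= p (y' + z) - b'.
  move=> Gy Gy'; have := Gp _ _ (GD _ _ _ _ Gy Gy').
  have := pD (y - z) (y' + z).
  have -> : y - z + (y' + z) = y + y' by rewrite addrACA addNr addr0.
  lra.
pose S := [set r | exists y b, G (y, b) /\ r = b - p (y - z)].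
pose c := sup S.
have Sne : S !=set0 by exists (0 - p (0 - z)); exists 0, 0.
have Sub : has_ubound S.
  by exists (p (0 + z) - 0) => r [y [b [Gy ->]]]; exact: key.
have cge y b : G (y, b) -> b - p (y - z) <= c.
  by move=> Gy; apply: ub_le_sup => //; exists y, b.
have cle y' b' : G (y', b') -> c <= p (y' + z) - b'.
  by move=> Gy'; apply: ge_sup => // r [y [b [Gy ->]]]; exact: key.
pose G' := [set xa | exists x a t, G (x, a) /\ xa = (x + t *: z, a + t * c)].
exists G'; split; last first.
  split.
    by move=> [x a] Gx; exists x, a, 0; rewrite scale0r mul0r !addr0.
  move=> /(_ (z, c)) h; apply: nz; exists c; apply: h.
  by exists 0, 0, 1; rewrite scale1r mul1r !add0r.
split.
- move=> w u v [x [a [t [Gx [e1 e2]]]]] [x' [a' [t' [Gx' [e1' e2']]]]].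
  subst w u v.
  have [tt|tt] := eqVneq t t'.
    subst t'; move: e1'; move/addIr => ex; subst x'.
    by rewrite (Gf _ _ _ Gx Gx').
  exfalso; apply: nz.
  have ez : z = (t - t')^-1 *: (x' - x).
    apply: (@scalerI _ _ (t - t')); first by rewrite subr_eq0.
    rewrite scalerA mulfV ?subr_eq0 // scale1r scalerBl.
    have -> : x' = x + t *: z - t' *: z by rewrite e1' addrK.
    by rewrite -!addrA addrC !addrA subrK.
  exists ((t - t')^-1 * (a' - a)); rewrite ez; apply: (GZ).
  have := GD _ _ _ _ Gx' (GZ (-1) _ _ Gx).
  by rewrite scaleN1r mulN1r.
- move=> w u w' u' [x [a [t [Gx [-> ->]]]]] [x' [a' [t' [Gx' [-> ->]]]]].
  have [e1 e2] : x + t *: z + (x' + t' *: z) = (x + x') + (t + t') *: z /\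
     a + t * c + (a' + t' * c) = (a + a') + (t + t') * c.
    split; last by ring.
    by rewrite scalerDl addrACA.
  by rewrite e1 e2; exists (x + x'), (a + a'), (t + t'); split => //; exact: GD.
- move=> s w u [x [a [t [Gx [-> ->]]]]].
  exists (s *: x), (s * a), (s * t); split; first exact: GZ.
  by rewrite scalerDr scalerA mulrDr mulrA.
- move=> w u [x [a [t [Gx [-> ->]]]]].
  have [t0|t0|->] := ltgtP t 0; last by rewrite scale0r mul0r !addr0; exact: Gp.
  + have s0 : 0 < - t by rewrite oppr_gt0.
    have := cge _ _ (GZ (- t)^-1 _ _ Gx).
    have e : (- t)^-1 *: x - z = (- t)^-1 *: (x + t *: z).
      have m1 : (- t)^-1 * t = -1 by rewrite invrN mulNr mulVf ?lt_eqF.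
      by rewrite scalerDr scalerA m1 scaleN1r.
    rewrite e pZ ?invr_gt0 // => h.
    have h2 : (- t) * ((- t)^-1 * a - (- t)^-1 * p (x + t *: z)) <= (- t) * c.
      by rewrite ler_pM2l.
    move: h2; rewrite mulrBr !mulrA mulfV ?oppr_eq0 ?lt_eqF // !mul1r.
    lra.
  + have := cle _ _ (GZ t^-1 _ _ Gx).
    have e : t^-1 *: x + z = t^-1 *: (x + t *: z).
      by rewrite scalerDr scalerA mulVf ?gt_eqF // scale1r.
    rewrite e pZ ?invr_gt0 // => h.
    have h2 : t * c <= t * (t^-1 * p (x + t *: z) - t^-1 * a).
      by rewrite ler_pM2l.
    move: h2; rewrite mulrBr !mulrA mulfV ?gt_eqF // !mul1r.
    lra.
- by exists x0, (p x0), 0; rewrite scale0r mul0r !addr0.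
Qed.

Lemma analytic_HB x0 : exists f : V -> R,
  (forall (a : R) x y, f (a *: x + y) = a * f x + f y) /\
  (forall x, f x <= p x) /\ f x0 = p x0.
Proof.
pose P := fun G : set (V * R) => G = set0 \/ goodG x0 G.
have Pgood G : P G -> forall w, G w -> goodG x0 G.
  by move=> [->//|//].
have [A [PA Amax]] : exists A, P A /\ forall B, A `<` B -> ~ P B.
  apply: Zorn_bigcup => F FP Ftot.
  have [Fe|Fne] := pselect (\bigcup_(X in F) X = set0).
    by left.
  move/eqP: Fne => /set0P [w [G FG Gw]].
  - right; have hG G1 w1 : F G1 -> G1 w1 -> goodG x0 G1.
      by move=> FG1 G1w; exact: (Pgood _ (FP _ FG1) _ G1w).
    have two G1 G2 w1 w2 : F G1 -> F G2 -> G1 w1 -> G2 w2 ->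
      exists G3, [/\ F G3, G3 w1 , G3 w2 & goodG x0 G3].
      move=> F1 F2 g1 g2; have [s12|s21] := Ftot _ _ F1 F2.
      + by exists G2; split => //; [exact: s12| exact: hG g2].
      + by exists G1; split => //; [exact: s21| exact: hG g1].
    split.
    + move=> x a b [G1 F1 g1] [G2 F2 g2].
      have [G3 [_ g31 g32 [Gf _ _ _ _]]] := two _ _ _ _ F1 F2 g1 g2.
      exact: Gf g31 g32.
    + move=> x a y b [G1 F1 g1] [G2 F2 g2].
      have [G3 [F3 g31 g32 [_ GD _ _ _]]] := two _ _ _ _ F1 F2 g1 g2.
      by exists G3 => //; exact: GD.
    + move=> t x a [G1 F1 g1].
      have [_ _ GZ _ _] := hG _ _ F1 g1.
      by exists G1 => //; exact: GZ.
    + move=> x a [G1 F1 g1].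
      have [_ _ _ Gp _] := hG _ _ F1 g1.
      exact: Gp.
    + have [_ _ _ _ Gx] := hG _ _ FG Gw.
      by exists G.
have gA : goodG x0 A.
  case: PA => // A0; exfalso.
  apply: (Amax _ _ (or_intror (G0good x0))); rewrite A0; split => // h.
  by have := h (x0, p x0); apply; exists 1; rewrite scale1r mul1r.
have tot z : exists a, A (z, a).
  apply/not_existsP => nz.
  have [G' [gG' AG']] := @extendG x0 A z gA (fun h => (let: ex_intro a ha := h in nz a ha)).
  exact: (Amax _ AG' (or_intror gG')).
pose f z := xget 0 [set a | A (z, a)].
have Af z : A (z, f z) by exact: (xgetPex 0 (tot z)).
have [Gf GD GZ Gp Gx0] := gA.
exists f; split; last split.
- move=> a x y; apply: (Gf _ _ _ (Af _)); apply: GD (Af _); exact: GZ.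
- by move=> x; exact: Gp.
- exact: Gf (Af _) Gx0.
Qed.

End AnalyticHB.
Section TvsHelpers.
Variables (R : realType) (X : tvsType R).

Lemma convW (W : set X) : convex_set W ->
  forall (l : R) x y, 0 <= l -> l <= 1 -> W x -> W y -> W (l *: x + (1 - l) *: y).
Proof.
move=> cW l x y l0 l1 Wx Wy.
have := cW x y (Itv01 l0 l1) (mem_set Wx) (mem_set Wy).
by rewrite inE.
Qed.

Lemma nbhs_subl (x0 : X) (U : set X) : nbhs x0 U -> nbhs (0 : X) [set v | U (x0 - v)].
Proof.
move=> Ux.
have : nbhs ((fun z : X * X => z.1 - z.2) (x0, 0)) U by rewrite /= subr0.
move=> /(@sub_continuous X (x0, 0)) [[A B] /= [A0 B0] AB].
apply: filterS B0 => v Bv; apply: (AB (x0, v)); split => //=.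
exact: nbhs_singleton.
Qed.

Lemma nbhs_scale0 (x : X) (W : set X) : nbhs (0 : X) W ->
  nbhs (0 : R^o) [set t : R^o | W (t *: x)].
Proof.
move=> W0.
have : nbhs ((fun z : R^o * X => z.1 *: z.2) (0, x)) W by rewrite /= scale0r.
move=> /(@scale_continuous R X (0, x)) [[A B] /= [A0 B0] AB].
apply: filterS A0 => t At; apply: (AB (t, x)); split => //=.
exact: nbhs_singleton.
Qed.

Lemma nbhs_aff (x : X) (k : R) (N : set X) : nbhs (0 : X) N ->
  nbhs x [set y | N (k *: (y - x))].
Proof.
move=> N0.
have : nbhs ((fun z : R^o * X => z.1 *: z.2) (k, 0)) N by rewrite /= scaler0.
move=> /(@scale_continuous R X (k, 0)) [[A B] /= [A0 B0] AB].
have M0 : nbhs ((fun z : X * X => z.1 - z.2) (x, x)) [set z | N (k *: z)].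
  rewrite /= subrr; apply: filterS B0 => z Bz; apply: (AB (k, z)); split => //=.
  exact: nbhs_singleton.
move: M0 => /(@sub_continuous X (x, x)) [[C D] /= [C0 D0] CD].
apply: filterS C0 => y Cy; apply: (CD (y, x)); split => //=.
exact: nbhs_singleton.
Qed.

Lemma nbhs0_opp (W : set X) : nbhs 0 W -> nbhs 0 [set v | W (- v)].
Proof.
move=> W0; have : nbhs (- (0:X)) W by rewrite oppr0.
move=> /(@opp_continuous X 0).
by [].
Qed.

Lemma absorb (W : set X) (x : X) : nbhs 0 W -> exists2 t : R, 0 < t & W (t *: x).
Proof.
move=> W0; have := @nbhs_scale0 x W W0 => /nbhs_ballP [e /= e0 He].
exists (e / 2); first by rewrite divr_gt0.
apply: He; rewrite /ball /= sub0r normrN gtr0_norm ?divr_gt0 //.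
by rewrite ltr_pdivrMr // ltr_pMr // ltr1n.
Qed.

End TvsHelpers.
Arguments convW {R X}.
Arguments nbhs_subl {R X}.
Arguments nbhs_scale0 {R X}.
Arguments nbhs_aff {R X}.
Arguments nbhs0_opp {R X}.
Arguments absorb {R X}.
Section Sep.
Variables (R : realType) (X : tvsType R) (h : X -> \bar R).
Hypothesis hlsc : lower_semicontinuous h.
Hypothesis hZ : forall (t : R) x, 0 < t -> h (t *: x) = (t%:E * h x)%E.
Hypothesis hD : forall x y : X, (h (x + y)%R <= h x + h y)%E.
Hypothesis h0 : h 0 = 0%E.
Hypothesis hge0 : forall x, (0 <= h x)%E.

Lemma hfin y : (h y < +oo)%E -> h y = (fine (h y))%:E /\ 0 <= fine (h y).
Proof.
move=> hy; have hf : h y \is a fin_num by rewrite ge0_fin_numE.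
by rewrite (fineK hf); split => //; rewrite -lee_fin fineK.
Qed.

Lemma conv_lt (a : R) (l : R) y y' : 0 <= l -> l <= 1 ->
  (h y < a%:E)%E -> (h y' < a%:E)%E -> (h (l *: y + (1 - l) *: y')%R < a%:E)%E.
Proof.
move=> l0 l1 hy hy'.
have [->|l0'] := eqVneq l 0; first by rewrite scale0r add0r subr0 scale1r.
have [->|l1'] := eqVneq l 1; first by rewrite scale1r subrr scale0r addr0.
have lp : 0 < l by rewrite lt_neqAle eq_sym l0' l0.
have lq : 0 < 1 - l by rewrite subr_gt0 lt_neqAle l1' l1.
have [ey ry] := hfin y (lt_trans hy (ltry a)).
have [ey' ry'] := hfin y' (lt_trans hy' (ltry a)).
apply: (le_lt_trans (hD _ _)); rewrite !hZ // ey ey' -!EFinM -EFinD lte_fin.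
move: hy hy'; rewrite ey ey' !lte_fin => hy hy'.
have : l * fine (h y) + (1 - l) * fine (h y') < l * a + (1 - l) * a.
  apply: ltr_leD; first by rewrite ltr_pM2l.
  by rewrite ler_wpM2l // ?ltW // subr_ge0.
by rewrite -mulrDl subrKC mul1r.
Qed.


Lemma lin0 (f : X -> R) : (forall (b : R) x y, f (b *: x + y) = b * f x + f y) -> f 0 = 0.
Proof.
move=> fl; have := fl 1 0 0; rewrite scale1r addr0 mul1r => e.
have : f 0 + f 0 - f 0 = f 0 - f 0 by rewrite -e.
by rewrite addrK subrr.
Qed.

Lemma linZ (f : X -> R) : (forall (b : R) x y, f (b *: x + y) = b * f x + f y) ->
  forall (b : R) x, f (b *: x) = b * f x.
Proof. by move=> fl b x; have := fl b x 0; rewrite addr0 lin0 // addr0. Qed.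

Lemma separation x0 : (0 < h x0)%E -> exists c : X -> R,
  (forall (b : R) x y, c (b *: x + y) = b * c x + c y) /\ continuous c /\
  (forall x, ((c x)%:E <= h x)%E) /\ 0 < c x0.
Proof.
move=> hx0.
have [a a0 ax0] : exists2 a : R, 0 < a & (a%:E < h x0)%E.
  case E: (h x0) => [r| |].
  - exists (r / 2); first by move: hx0; rewrite E lte_fin => r0; rewrite divr_gt0.
    move: hx0; rewrite E !lte_fin => r0; rewrite ltr_pdivrMr // ltr_pMr //.
    by rewrite ltr1n.
  - by exists 1 => //; exact: ltry.
  - by move: (hge0 x0); rewrite E.
have [U Ux0 hU] := hlsc x0 a ax0.
have N0 := nbhs_subl x0 U Ux0.
have [B Bc [Bo Bb]] := @locally_convex R X.
have [W [BW W0'] WN] := Bb 0 _ N0.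
have W0 : nbhs 0 W by apply: open_nbhs_nbhs; split => //; exact: Bo.
have cW := Bc W (mem_set BW).
pose D := [set z | exists y v, (h y < a%:E)%E /\ W v /\ z = y + v].
have Dconv l z z' : 0 <= l -> l <= 1 -> D z -> D z' -> D (l *: z + (1 - l) *: z').
  move=> l0 l1 [y [v [hy [Wv ->]]]] [y' [v' [hy' [Wv' ->]]]].
  exists (l *: y + (1 - l) *: y'), (l *: v + (1 - l) *: v'); split.
    exact: conv_lt.
  split; first exact: convW.
  by rewrite !scalerDr addrACA.
have ha : (h (0:X)%R < a%:E)%E by rewrite h0 lte_fin.
have D0 : D 0 by exists 0, 0; rewrite addr0.
have WD v : W v -> D v by move=> Wv; exists 0, v; rewrite add0r.
have x0D : ~ D x0.
  move=> [y [v [hy [Wv e]]]].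
  have hv : x0 - v = y by rewrite e addrK.
  have := hU _ (WN _ Wv); rewrite hv => /(lt_trans hy); by rewrite ltxx.
pose S x := [set s : R | 0 < s /\ D (s^-1 *: x)].
pose p x := inf (S x).
have Sne x : S x !=set0.
  have [t t0 Wt] := absorb W x W0.
  by exists t^-1; split; [rewrite invr_gt0 | rewrite invrK; exact: WD].
have Slb x : has_lbound (S x) by exists 0 => s [s0 _]; exact: ltW.
have ple1 z : D z -> p z <= 1.
  move=> Dz; apply: ge_inf => //; split => //; by rewrite invr1 scale1r.
have pge0 x : 0 <= p x by apply: lb_le_inf => // s [s0 _]; exact: ltW.
have pZle t x : 0 < t -> p (t *: x) <= t * p x.
  move=> t0; rewrite -ler_pdivrMl //; apply: lb_le_inf => // s [s0 Ds].
  rewrite ler_pdivrMl //; apply: ge_inf => //; split; first exact: mulr_gt0.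
  by rewrite scalerA invfM mulrAC mulVf ?gt_eqF // mul1r.
have pZ t x : 0 < t -> p (t *: x) = t * p x.
  move=> t0; apply/le_anti; rewrite pZle //=.
  have := pZle t^-1 (t *: x); rewrite invr_gt0 => /(_ t0).
  by rewrite scalerA mulVf ?gt_eqF // scale1r -ler_pdivlMl ?invr_gt0 // invrK.
have pD x y : p (x + y) <= p x + p y.
  rewrite -lerBlDl; apply: lb_le_inf => // s' [s0' Ds'].
  rewrite lerBlDl -lerBlDr; apply: lb_le_inf => // s [s0 Ds].
  rewrite lerBlDr; apply: ge_inf => //; split; first exact: addr_gt0.
  have ss : 0 < s + s' by exact: addr_gt0.
  have := Dconv (s / (s + s')) _ _ (ltW (divr_gt0 s0 ss)) _ Ds Ds'.
  have -> : 1 - s / (s + s') = s' / (s + s') .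
    by apply/eqP; rewrite subr_eq -mulrDl addrC mulfV // gt_eqF.
  have e1 : s / (s + s') * s^-1 = (s + s')^-1 by rewrite mulrAC mulfV ?gt_eqF // mul1r.
  have e2 : s' / (s + s') * s'^-1 = (s + s')^-1 by rewrite mulrAC mulfV ?gt_eqF // mul1r.
  rewrite !scalerA e1 e2 -scalerDr; apply.
  by rewrite ler_pdivrMr // mul1r lerDl ltW.
have px0 : 1 <= p x0.
  rewrite leNgt; apply/negP => /(inf_lt (Sne x0)) [s [s0 Ds] s1].
  apply: x0D; have := Dconv s _ _ (ltW s0) (ltW s1) Ds D0.
  by rewrite scaler0 addr0 scalerA mulfV ?gt_eqF // scale1r.
have [f [fl [fp fx0]]] := @analytic_HB R X p pZ pD x0.
have fZ := linZ f fl.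
have fN v : f (- v) = - f v by rewrite -scaleN1r fZ mulN1r.
exists (fun x => a * f x); split; last split; last split.
- by move=> b x y; rewrite fl; ring.
- pose N := [set v | W v /\ W (- v)].
  have N0' : nbhs 0 N by apply: filterI => //; exact: nbhs0_opp.
  have fN1 v : N v -> `|f v| <= 1.
    move=> [Wv Wnv]; rewrite ler_norml; apply/andP; split.
      by rewrite lerNl -fN (le_trans (fp _)) // ple1 //; exact: WD.
    by rewrite (le_trans (fp _)) // ple1 //; exact: WD.
  move=> x; apply/cvgrPdist_lt => e e0.
  have k0 : 0 < 2 * a / e by rewrite divr_gt0 // mulr_gt0.
  apply: filterS (nbhs_aff x (2 * a / e) N N0') => y /fN1.
  have -> : y - x = (-1) *: x + y by rewrite scaleN1r addrC.
  rewrite fZ fl mulN1r normrM gtr0_norm // addrC => hk.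
  rewrite -mulrBr normrM gtr0_norm // distrC.
  set t := `|_| in hk *.
  have h2 : 2 * (a * t) <= e.
    by move: hk; rewrite mulrAC ler_pdivrMr // mul1r mulrA; exact: id.
  have at0 : 0 <= a * t by rewrite mulr_ge0 ?normr_ge0 // ltW.
  lra.
- move=> y; have [hy|] := boolP (h y < +oo)%E; last first.
    by rewrite -leNgt leye_eq => /eqP ->; exact: leey.
  have [ey ry] := hfin y hy; rewrite ey lee_fin.
  rewrite leNgt; apply/negP => hlt.
  pose r' := (a * f y + fine (h y)) / 2.
  have r'1 : fine (h y) < r' by rewrite /r' ltr_pdivlMr // mulr_natr mulr2n ltrD2r.
  have r'2 : r' < a * f y by rewrite /r' ltr_pdivrMr // mulr_natr mulr2n ltrD2l.
  have r'0 : 0 < r' by exact: le_lt_trans r'1.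
  have t0 : 0 < a / r' by exact: divr_gt0.
  have Dty : D ((a / r') *: y).
    exists ((a / r') *: y), 0; rewrite addr0; split; last by split.
    by rewrite hZ // ey -EFinM lte_fin mulrAC ltr_pdivrMr // ltr_pM2l.
  have := le_trans (fp _) (ple1 _ Dty); rewrite fZ mulrAC ler_pdivrMr // mul1r.
  by rewrite leNgt r'2.
- by rewrite fx0 mulr_gt0 // (lt_le_trans ltr01).
Qed.

End Sep.
Arguments separation {R X h}.
Section FinSep.
Variables (R : realType) (T : lmodType R).

Definition linf (f : T -> R) := forall (a : R) u v, f (a *: u + v) = a * f u + f v.

Lemma linf0 f : linf f -> f 0 = 0.
Proof.
move=> fl; have := fl 1 0 0; rewrite scale1r addr0 mul1r => e.
have : f 0 + f 0 - f 0 = f 0 - f 0 by rewrite -e.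
by rewrite addrK subrr.
Qed.

Lemma linfZ f : linf f -> forall (a : R) u, f (a *: u) = a * f u.
Proof. by move=> fl a u; have := fl a u 0; rewrite addr0 linf0 // addr0. Qed.

Lemma linfD f : linf f -> forall u v, f (u + v) = f u + f v.
Proof. by move=> fl u v; have := fl 1 u v; rewrite scale1r mul1r. Qed.

Lemma linfB f : linf f -> forall u v, f (u - v) = f u - f v.
Proof.
move=> fl u v; rewrite linfD // -scaleN1r linfZ //; ring.
Qed.

Lemma finsep (s : seq T) : forall (K : (T -> R) -> Prop) (psi : T -> R),
  K (fun _ => 0) ->
  (forall f g, K f -> K g -> K (fun v => f v + g v)) ->
  (forall (t : R) f, K f -> K (fun v => t * f v)) ->
  (forall k, K k -> linf k) -> linf psi ->
  (exists k, K k /\ forall i, i \in s -> k i = psi i) \/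
  (exists z, (forall k, K k -> k z = 0) /\ psi z <> 0).
Proof.
elim: s => [|x s IH] K psi K0 KD KZ Kl psil.
  by left; exists (fun _ => 0); split.
have [Kx|] := pselect (forall k, K k -> k x = 0).
  have [px|px] := eqVneq (psi x) 0; last by right; exists x; split => //; exact/eqP.
  have [[k [Kk kp]]|[z [zk pz]]] := IH K psi K0 KD KZ Kl psil.
    left; exists k; split => // i; rewrite in_cons => /orP[/eqP ->|/kp //].
    by rewrite px Kx.
  by right; exists z.
move=> /existsNP [k1 /not_implyP [Kk1 k1x]].
pose k1' := fun v => (k1 x)^-1 * k1 v.
have Kk1' : K k1' by exact: KZ.
have k1'x : k1' x = 1 by rewrite /k1' mulVf //; exact/eqP.
have k1'l : linf k1' := Kl _ Kk1'.
pose K' := fun k => K k /\ k x = 0.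
pose psi' := fun v => psi v - psi x * k1' v.
have psi'l : linf psi'.
  move=> a u v; rewrite /psi' psil k1'l; ring.
have K'0 : K' (fun _ => 0) by split.
have K'D : forall f g, K' f -> K' g -> K' (fun v => f v + g v).
  move=> f g [Kf fx] [Kg gx]; split; first exact: KD.
  by rewrite fx gx addr0.
have K'Z : forall (t : R) f, K' f -> K' (fun v => t * f v).
  move=> t f [Kf fx]; split; first exact: KZ.
  by rewrite fx mulr0.
have K'l : forall k, K' k -> linf k by move=> k [Kk _]; exact: Kl.
have [[k [[Kk kx] kp]]|[z [zk pz]]] := IH K' psi' K'0 K'D K'Z K'l psi'l.
- left; exists (fun v => k v + psi x * k1' v); split.
    by apply: KD => //; exact: KZ.
  move=> i; rewrite in_cons => /orP[/eqP ->|/kp ->].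
    by rewrite kx k1'x add0r mulr1.
  by rewrite /psi' subrK.
- right; exists (z - k1' z *: x); split.
    move=> k Kk; rewrite (@linfB k (Kl _ Kk)) (@linfZ k (Kl _ Kk)).
    have K'k : K' (fun v => k v + (- k x) * k1' v).
      split; first by apply: KD => //; exact: KZ.
      by rewrite k1'x mulr1 subrr.
    have := zk _ K'k; rewrite mulNr => e.
    by rewrite mulrC; apply/eqP; rewrite subr_eq0; apply/eqP; move: e => /eqP;
      rewrite subr_eq0 => /eqP.
  rewrite (@linfB psi psil) (@linfZ psi psil); move: pz; rewrite /psi' mulrC //.
Qed.

End FinSep.
Arguments linf {R T}.
Arguments linf0 {R T}.
Arguments linfZ {R T}.
Arguments linfD {R T}.
Arguments linfB {R T}.
Arguments finsep {R T}.
Section ContHelpers.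
Variables (R : realType) (T : topologicalType).

Lemma contD (f g : T -> R) : continuous f -> continuous g ->
  continuous (fun v => f v + g v).
Proof. by move=> cf cg x; apply: cvgD; [exact: cf | exact: cg]. Qed.

Lemma contN (f : T -> R) : continuous f -> continuous (fun v => - f v).
Proof. by move=> cf x; apply: cvgN; exact: cf. Qed.

Lemma contMl (t : R) (f : T -> R) : continuous f -> continuous (fun v => t * f v).
Proof. by move=> cf x; apply: cvgMl_tmp; exact: cf. Qed.

Lemma contC (c : R) : continuous (fun _ : T => c).
Proof. by move=> x; exact: cvg_cst. Qed.

Lemma ecases (e : \bar R) : e != -oo%E -> e = +oo%E \/ exists r : R, e = r%:E.
Proof. by case: e => [r| |] //= _; [right; exists r | left]. Qed.

Lemma lsc_sub (g : T -> \bar R) (f : T -> R) :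
  lower_semicontinuous g -> continuous f ->
  lower_semicontinuous (fun x => (g x - (f x)%:E)%E).
Proof.
move=> gl fc x a hax.
have [eps e0 hx] : exists2 eps : R, 0 < eps & ((a + f x + eps)%:E < g x)%E.
  move: hax; case: (g x) => [r| |] /=.
  - rewrite lte_fin => h; exists ((r - f x - a) / 2); rewrite ?lte_fin; lra.
  - by move=> _; exists 1 => //; exact: ltry.
  - by [].
have [U Ux hU] := gl _ _ hx.
have Vf : \forall y \near x, `|f x - f y| < eps by move: (fc x); move/cvgrPdist_lt => /(_ _ e0).
exists (U `&` [set y | `|f x - f y| < eps]); first by apply: filterI.
move=> y [Uy fy]; have := hU _ Uy.
case: (g y) => [r| |] /=.
- rewrite !lte_fin => hr.
  move: fy => /=; rewrite ltr_norml => /andP[f1 f2]; lra.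
- by move=> _; exact: ltry.
- by [].
Qed.

End ContHelpers.
Arguments contD {R T}.
Arguments contN {R T}.
Arguments contMl {R T}.
Arguments contC {R T}.
Arguments lsc_sub {R T}.
Theorem proposition9 (R : realType) (X : tvsType R)
  (Y : preTopologicalLmodType R) (pi : X -> Y)
  (g : X -> \bar R) (xs : X -> R) :
  hausdorff_space X ->
  (exists x : X, x != 0) ->
  Gamma g -> sublinear g ->
  subdiff0 g xs ->
  (* Y = X / L_g with the quotient topology, pi the canonical projection *)
  is_linear pi ->
  (forall y : Y, exists x : X, pi x = y) ->
  (forall x : X, pi x = 0 <-> Lsp g xs x) ->
  (forall U : set Y, open U <-> open (pi @^-1` U)) ->
  let gh := hatg pi g xs in
  (forall x : X, gh (pi x) = (g x - (xs x)%:E)%E) /\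
  proper_fun gh /\ lower_semicontinuous gh /\ sublinear gh /\
  (forall y : Y, (0 <= gh y)%E) /\
  (forall u, subdiff0 gh u -> Lsp gh u = [set 0]) /\
  (qri (subdiff0 g) xs <-> qi (subdiff0 gh) (fun _ => 0)).
Proof.
move=> _ _ [[gnm [v0 gv0]] [glsc _]] [gZ gD] [[xsl xsc] xsle] pil pisurj piker
  piopen gh.
have xsL : linf xs by exact: xsl.
have xs0 : xs 0 = 0 := linf0 _ xsL.
have xsN x : xs (- x) = - xs x by rewrite -scaleN1r (linfZ _ xsL) mulN1r.
have xsD x y : xs (x + y) = xs x + xs y := linfD _ xsL x y.
have xsZ a x : xs (a *: x) = a * xs x := linfZ _ xsL a x.
have g0 : g 0 = 0%E.
  have g0ge : (0 <= g 0%R)%E by move: (xsle 0); rewrite xs0.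
  apply/eqP; rewrite eq_le g0ge andbT leNgt; apply/negP => g0pos.
  have [b b0 bg] : exists2 b : R, 0 < b & (b%:E < g 0%R)%E.
    move: g0pos; case: (g 0) => [r| |] /=.
    - rewrite lte_fin => r0; exists (r / 2); rewrite ?lte_fin; lra.
    - by move=> _; exists 1 => //; exact: ltry.
    - by [].
  have [U U0 hU] := glsc 0 b bg.
  have gv0f : g v0 = (fine (g v0))%:E.
    by rewrite fineK // fin_numE gnm /= (lt_eqF gv0).
  set r := fine (g v0) in gv0f.
  have := nbhs_scale0 v0 U U0 => /nbhs_ballP [e /= e0 He].
  pose t := Num.min (e / 2) (b / (2 * (`|r| + 1))).
  have r1 : 0 < `|r| + 1 by rewrite ltr_pwDr // normr_ge0.
  have t0 : 0 < t by rewrite lt_min !divr_gt0 // mulr_gt0.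
  have Ut : U (t *: v0).
    apply: He; rewrite /ball /= sub0r normrN gtr0_norm //.
    have : t <= e / 2 by rewrite ge_min lexx.
    lra.
  have := hU _ Ut; rewrite gZ // gv0f -EFinM lte_fin.
  have h1 : t * r <= t * `|r| by apply: ler_wpM2l; [exact: ltW | exact: ler_norm].
  have h2 : t * `|r| <= b / (2 * (`|r| + 1)) * `|r|.
    by apply: ler_wpM2r; [exact: normr_ge0 | rewrite ge_min lexx orbT].
  have h3 : b / (2 * (`|r| + 1)) * `|r| < b.
    rewrite mulrAC ltr_pdivrMr ?mulr_gt0 // ltr_pM2l //; lra.
  lra.
pose h x := (g x - (xs x)%:E)%E.
have gE x : g x = +oo%E \/ exists r : R, g x = r%:E := @ecases R (g x) (gnm x).
have hge0 x : (0 <= h x)%E.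
  rewrite /h; case: (gE x) => [->|[r er]] /=; first exact: leey.
  by move: (xsle x); rewrite er !lee_fin subr_ge0.
have h0 : h 0 = 0%E by rewrite /h g0 xs0 sube0.
have hZ t x : 0 < t -> h (t *: x) = (t%:E * h x)%E.
  move=> t0; rewrite /h gZ // xsZ.
  case: (gE x) => [->|[r ->]] /=; first by rewrite gt0_muley.
  by rewrite -EFinM -EFinB -EFinM mulrBr.
have hD x y : (h (x + y)%R <= h x + h y)%E.
  rewrite /h xsD; have := gD x y.
  case: (gE x) => [->|[r ->]]; case: (gE y) => [->|[r' ->]];
    case: (gE (x + y)) => [->|[r'' ->]] /= => H; try exact: leey;
    try (by move: H; rewrite leye_eq).
  by move: H; rewrite !lee_fin => H; lra.
have hlsc : lower_semicontinuous h := lsc_sub g xs glsc xsc.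
have sep := separation hlsc hZ hD h0 hge0.
have pi0 : pi 0 = 0.
  have := pil 1 0 0; rewrite !scale1r addr0 => /eqP.
  by move=> /eqP e; apply: (@addrI _ (pi 0)); rewrite addr0 -e.
have piZ a x : pi (a *: x) = a *: pi x.
  by have := pil a x 0; rewrite addr0 pi0 addr0.
have piD x y : pi (x + y) = pi x + pi y by have := pil 1 x y; rewrite !scale1r.
have piN x : pi (- x) = - pi x by rewrite -scaleN1r piZ scaleN1r.
have piB x y : pi (x - y) = pi x - pi y by rewrite piD piN.
pose lift y := xget 0 [set x | pi x = y].
have piK y : pi (lift y) = y := xgetPex 0 (pisurj y).
have ghE y : gh y = h (lift y) by [].
have LN l : Lsp g xs l -> Lsp g xs (- l).
  by move=> [e1 e2]; split; rewrite ?opprK xsN // e1 opprK.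
have hL (y l : X) : Lsp g xs l -> (h (y + l)%R <= h y)%E.
  move=> [e1 _]; rewrite /h xsD; have := gD y l; rewrite e1.
  case: (gE y) => [->|[r ->]] /=; first by move=> _; exact: leey.
  case: (gE (y + l)) => [->|[r' ->]] /=; first by rewrite leye_eq.
  by rewrite !lee_fin => H; lra.
have hwd x x' : pi x = pi x' -> h x = h x'.
  move=> e; have Ll : Lsp g xs (x - x') by apply/piker; rewrite piB e subrr.
  apply/le_anti/andP; split.
    by have := hL x' _ Ll; rewrite addrC subrK.
  by have := hL x _ (LN _ Ll); rewrite opprB addrC subrK.
have ghpi x : gh (pi x) = h x by rewrite ghE; apply: hwd; rewrite piK.
have cL c : subdiff0 g c -> forall l, Lsp g xs l -> c l = xs l.
  move=> [[cl _] cle] l [e1 e2].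
  have cL : linf c by exact: cl.
  have := cle l; have := cle (- l); rewrite e1 e2 !lee_fin.
  rewrite -scaleN1r (linfZ _ cL) => h1 h2; lra.
have picont : continuous pi.
  by apply/continuousP => A /piopen.
have descend f : dual f -> (forall l, Lsp g xs l -> f l = 0) ->
    exists phi : Y -> R, dual phi /\ forall x, phi (pi x) = f x.
  move=> [fl fc] fL; have fL' : linf f by exact: fl.
  have fpi x : f (lift (pi x)) = f x.
    have Ll : Lsp g xs (lift (pi x) - x) by apply/piker; rewrite piB piK subrr.
    by have := fL _ Ll; rewrite (linfB _ fL') => /eqP; rewrite subr_eq0 => /eqP.
  exists (fun y => f (lift y)); split => //; split.
    move=> a y y'; have [x <-] := pisurj y; have [x' <-] := pisurj y'.
    by rewrite -piZ -piD !fpi (fL' a).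
  apply/continuousP => A oA; apply/piopen.
  have -> : pi @^-1` [set y | A (f (lift y))] = f @^-1` A.
    by apply/funext => x /=; rewrite fpi.
  by move: fc => /continuousP; apply.
have hzero x : h x = 0%E -> g x = (xs x)%:E.
  rewrite /h; case: (gE x) => [->|[r ->]] //= [] /eqP.
  by rewrite subr_eq0 => /eqP ->.
have factor c : subdiff0 g c ->
    exists u, subdiff0 gh u /\ forall x, u (pi x) = c x - xs x.
  move=> sc; have [[cl cc] cle] := sc.
  have fd : dual (fun x => c x - xs x).
    split; first by move=> a x y; rewrite cl xsl; ring.
    exact: (contD _ _ cc (contN _ xsc)).
  have fL l : Lsp g xs l -> c l - xs l = 0 by move=> Ll; rewrite (cL _ sc _ Ll) subrr.
  have [u [ud uE]] := descend _ fd fL.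
  exists u; split => //; split => // y.
  have [x <-] := pisurj y; rewrite uE ghpi /h.
  case: (gE x) => [->|[r er]] /=; first exact: leey.
  by move: (cle x); rewrite er !lee_fin => H; lra.
have unfactor u : subdiff0 gh u -> subdiff0 g (fun x => u (pi x) + xs x).
  move=> [[ul uc] ule]; split; first split.
  - by move=> a x y; rewrite piD piZ ul xsl; ring.
  - apply: contD => //; move=> x; apply: continuous_comp; [exact: picont | exact: uc].
  - move=> x; have := ule (pi x); rewrite ghpi /h.
    case: (gE x) => [->|[r er]] /=; first by move=> _; exact: leey.
    by rewrite er !lee_fin => H; lra.
split; first by move=> x; rewrite ghpi.
split.
  split; first by move=> y; rewrite ghE; apply/eqP => e; have := hge0 (lift y);
    rewrite e leeNy_eq.
  exists (pi v0); rewrite ghpi /h; move: gv0.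
  by case: (gE v0) => [->|[r ->]] //= _; exact: ltry.
split.
  apply/lower_semicontinuousP => a; apply/piopen.
  have -> : pi @^-1` [set y | (a%:E < gh y)%E] = [set x | (a%:E < h x)%E].
    by apply/funext => x /=; rewrite ghpi.
  by move: hlsc => /lower_semicontinuousP; apply.
split.
  split.
    by move=> t y t0; have [x <-] := pisurj y; rewrite -piZ !ghpi; exact: hZ.
  by move=> y y'; have [x <-] := pisurj y; have [x' <-] := pisurj y';
    rewrite -piD !ghpi; exact: hD.
split; first by move=> y; rewrite ghE; exact: hge0.
split.
  move=> u [[ul uc] ule]; have uL : linf u by exact: ul.
  have u0 := linf0 _ uL.
  apply/seteqP; split => y /=.
  - move=> [e1 e2]; have [x ex] := pisurj y; subst y.
    rewrite ghpi in e1; rewrite -piN ghpi in e2.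
    have := hge0 x; have := hge0 (- x); rewrite e1 e2 !lee_fin => h1 h2.
    have ux : u (pi x) = 0 by lra.
    apply/piker; split.
    + by apply: hzero; rewrite e1 ux.
    + by rewrite -xsN; apply: hzero; rewrite e2 ux oppr0.
  - move=> ->; rewrite /Lsp /= oppr0 u0 oppr0 -pi0 ghpi h0; by split.
pose coneX := cone_at (subdiff0 g) xs.
pose coneY := cone_at (subdiff0 gh) (fun _ => 0).
have C1 f : coneX f -> exists f', coneY f' /\ forall x, f' (pi x) = f x.
  move=> [t [c [t0 [sc ->]]]]; have [u [su uE]] := factor c sc.
  exists (fun v => t * (u v - 0)); split; first by exists t, u.
  by move=> x; rewrite uE subr0.
have C2 f' : coneY f' -> exists f, coneX f /\ forall x, f x = f' (pi x).
  move=> [t [u [t0 [su ->]]]].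
  exists (fun v => t * ((u (pi v) + xs v) - xs v)); split.
    by exists t, (fun x => u (pi x) + xs x); split => //; split => //; exact: unfactor.
  by move=> x /=; rewrite addrK subr0.
have coneX_dual f : coneX f -> dual f.
  move=> [t [c [t0 [[[cl cc] _] ->]]]]; split.
    by move=> a x y; rewrite cl xsl; ring.
  by apply: contMl; exact: (contD _ _ cc (contN _ xsc)).
have coneX_wcl f : coneX f -> wclosure coneX f.
  move=> cf; split; first exact: coneX_dual.
  by move=> s e e0; exists f => // v _; rewrite subrr normr0.
have coneX_L f : coneX f -> forall l, Lsp g xs l -> f l = 0.
  by move=> [t [c [t0 [sc ->]]]] l Ll; rewrite (cL _ sc _ Ll) subrr mulr0.
have W1 f : wclosure coneX f -> forall l, Lsp g xs l -> f l = 0.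
  move=> [fd fa] l Ll; have [//|fl0] := eqVneq (f l) 0.
  have e0 : 0 < `|f l| by rewrite normr_gt0.
  have [hh ch hc] := fa [:: l] _ e0.
  by have := hc l (mem_head _ _); rewrite (coneX_L _ ch _ Ll) sub0r normrN ltxx.
have W2 phi : wclosure coneY phi -> wclosure coneX (fun x => phi (pi x)).
  move=> [[phil phic] phia]; split; first split.
  - by move=> a x y; rewrite piD piZ phil.
  - by move=> x; apply: continuous_comp; [exact: picont | exact: phic].
  - move=> s e e0; have [f' cf' hf'] := phia (map pi s) e e0.
    have [f [cf fE]] := C2 _ cf'.
    by exists f => // v vs; rewrite fE; apply: hf'; exact: map_f.
split.
- move=> [sxs [K0 [KD KZ]]]; split.
    split; first split.
    + by move=> a x y; rewrite mulr0 addr0.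
    + exact: contC.
    + by move=> y; rewrite ghE; exact: hge0.
  apply/seteqP; split; first by move=> phi [].
  move=> phi phid; split => // s e e0.
  have [phil phic] := phid.
  pose psi := fun x => phi (pi x).
  have psil : linf psi by move=> a x y; rewrite /psi piD piZ phil.
  have Kl k : wclosure coneX k -> linf k by move=> [[kl _] _]; exact: kl.
  have [[k [Kk kE]]|[z [zk pz]]] := finsep (map lift s) (wclosure coneX) psi
    K0 KD KZ Kl psil.
  + have [_ ka] := Kk; have [hh ch hc] := ka (map lift s) e e0.
    have [h' [ch' h'E]] := C1 _ ch.
    exists h' => // y ys; have ly : lift y \in map lift s := map_f _ ys.
    rewrite -{1}(piK y) h'E; have := hc _ ly.
    by rewrite kE // /psi piK.
  + exfalso; apply: pz.
    have claim w : (forall c, subdiff0 g c -> c w = xs w) -> h w = 0%E.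
      move=> Hw; apply/eqP; rewrite eq_le hge0 andbT leNgt; apply/negP => hpos.
      have [c' [c'l [c'c [c'le c'w]]]] := sep w hpos.
      have sc : subdiff0 g (fun x => c' x + xs x).
        split; first split.
        * by move=> a x y; rewrite c'l xsl; ring.
        * exact: contD.
        * move=> x; have := c'le x; rewrite /h.
          case: (gE x) => [->|[r ->]] /=; first by move=> _; exact: leey.
          by rewrite !lee_fin => H; lra.
      by have := Hw _ sc; lra.
    have Hz c : subdiff0 g c -> c z = xs z.
      move=> sc; have cX : coneX (fun v => 1 * (c v - xs v)).
        by exists 1, c; split => //; split.
      by have := zk _ (coneX_wcl _ cX); rewrite mul1r => /eqP; rewrite subr_eq0 => /eqP.
    have hz := claim z Hz.
    have hnz : h (- z) = 0%E.
      apply: claim => c sc; have [[cl _] _] := sc; have cL' : linf c by exact: cl.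
      by rewrite -scaleN1r (linfZ _ cL') (Hz _ sc) xsZ.
    have Lz : Lsp g xs z by split; [exact: hzero | rewrite -xsN; exact: hzero].
    by rewrite /psi (proj2 (piker z) Lz) (linf0 _ phil).
- move=> [_ wY]; split; first by split => //; split.
  have char f : dual f -> (forall l, Lsp g xs l -> f l = 0) -> wclosure coneX f.
    move=> fd fL; have [phi [phid phiE]] := descend f fd fL.
    have wphi : wclosure coneY phi by rewrite wY.
    have -> : f = (fun x => phi (pi x)) by apply/funext => x; rewrite phiE.
    exact: W2.
  split; [|split].
  + apply: char => //; split; first by move=> a x y; rewrite mulr0 addr0.
    exact: contC.
  + move=> f f' wf wf'; have [[fl fc] _] := wf; have [[fl' fc'] _] := wf'.
    apply: char.
      split; first by move=> a x y; rewrite fl fl'; ring.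
      exact: contD.
    by move=> l Ll; rewrite (W1 _ wf _ Ll) (W1 _ wf' _ Ll) addr0.
  + move=> t f wf; have [[fl fc] _] := wf.
    apply: char.
      split; first by move=> a x y; rewrite fl; ring.
      exact: contMl.
    by move=> l Ll; rewrite (W1 _ wf _ Ll) mulr0.
Qed.
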